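(* Let $\varepsilon>0$, $\theta_0>0$, $\Delta t>0$, $N\in\mathbb{N}$, $h=L/N$, and assume the mobility is constant, $\mathcal{M}\equiv1$. Consider the scheme: given $\phi^n\in\mathcal{C}_{\rm per}$, find $\phi^{n+1},\mu^{n+1}\in\mathcal{C}_{\rm per}$ with $$\frac{\phi^{n+1}-\phi^n}{\Delta t}=\Delta_h\mu^{n+1},\qquad \mu^{n+1}=\ln(1+\phi^{n+1})-\ln(1-\phi^{n+1})-\theta_0\phi^n-\varepsilon^2\Delta_h\phi^{n+1}.$$ Given $\phi^n\in\mathcal{C}_{\rm per}$ with $\|\phi^n\|_\infty\le M$ for some $M>0$ and $|\overline{\phi^n}|<1$, there exists a unique solution $\phi^{n+1}\in\mathcal{C}_{\rm per}$ of this scheme with $\phi^{n+1}-\overline{\phi^n}\in\mathring{\mathcal{C}}_{\rm per}$ and $\|\phi^{n+1}\|_\infty<1$.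
   Context: $\Omega=(0,L)^3$, periodic. Grid points $p_i=(i-\tfrac12)h$, $h=L/N$. $\mathcal{C}_{\rm per}$ is the space of real $N$-periodic grid functions $\nu_{i,j,k}$ on cell centers $(p_i,p_j,p_k)$. Inner product $\langle\nu,\xi\rangle=h^3\sum_{i,j,k=1}^N\nu_{i,j,k}\xi_{i,j,k}$; mean $\overline{\nu}=|\Omega|^{-1}\langle\nu,1\rangle$; $\mathring{\mathcal{C}}_{\rm per}=\{\nu\in\mathcal{C}_{\rm per}:\overline{\nu}=0\}$. $\Delta_h\nu_{i,j,k}=h^{-2}(\nu_{i+1,j,k}+\nu_{i-1,j,k}+\nu_{i,j+1,k}+\nu_{i,j-1,k}+\nu_{i,j,k+1}+\nu_{i,j,k-1}-6\nu_{i,j,k})$. $\|\nu\|_\infty=\max_{i,j,k}|\nu_{i,j,k}|$. Logarithms are applied pointwise. *)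

(* Defs.v *)
From HB Require Import structures.
From mathcomp Require Import all_boot all_order all_algebra.
From mathcomp Require Import reals exp.
Set Implicit Arguments. Unset Strict Implicit. Unset Printing Implicit Defensive.
Import Order.TTheory GRing.Theory Num.Theory.
Local Open Scope ring_scope.

(* C_per : real N-periodic grid functions on cell centres, indexed by ('I_N)^3;
   periodicity is encoded by cyclic neighbours ordS / ord_pred on 'I_N. *)
Definition grid (R : realType) (N : nat) := 'I_N -> 'I_N -> 'I_N -> R.

Definition ip (R : realType) (N : nat) (h : R) (u v : grid R N) : R :=
  h ^+ 3 * \sum_(i < N) \sum_(j < N) \sum_(k < N) u i j k * v i j k.

(* mean  |Omega|^{-1} <u,1>, with |Omega| = L^3, h = L/N *)
Definition gmean (R : realType) (N : nat) (L : R) (u : grid R N) : R :=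
  (L ^+ 3)^-1 * ip (L / N%:R) u (fun _ _ _ => 1).

Definition lap_h (R : realType) (N : nat) (h : R) (u : grid R N) : grid R N :=
  fun i j k => h ^- 2 *
    (u (ordS i) j k + u (ord_pred i) j k + u i (ordS j) k + u i (ord_pred j) k
     + u i j (ordS k) + u i j (ord_pred k) - 6%:R * u i j k).

Definition norm_inf (R : realType) (N : nat) (u : grid R N) : R :=
  \big[Num.max/0]_(i < N) \big[Num.max/0]_(j < N) \big[Num.max/0]_(k < N) `|u i j k|.

Definition scheme (R : realType) (N : nat) (L eps theta0 dt : R)
    (phi0 phi1 mu : grid R N) : Prop :=
  (forall i j k, (phi1 i j k - phi0 i j k) / dt = lap_h (L / N%:R) mu i j k) /\
  (forall i j k, mu i j k = ln (1 + phi1 i j k) - ln (1 - phi1 i j k)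
      - theta0 * phi0 i j k - eps ^+ 2 * lap_h (L / N%:R) phi1 i j k).

Definition admissible (R : realType) (N : nat) (L eps theta0 dt : R)
    (phi0 phi1 : grid R N) : Prop :=
  (exists mu, scheme L eps theta0 dt phi0 phi1 mu) /\
  gmean L (fun i j k => phi1 i j k - gmean L phi0) = 0 /\
  norm_inf phi1 < 1.

(* Main.v *)
Require Import Defs.
From HB Require Import structures.
From mathcomp Require Import all_boot all_order all_algebra.
From mathcomp Require Import boolp classical_sets reals topology normedtype sequences matrix_normedtype derive exp.
From mathcomp Require Import ring lra zify.
Set Implicit Arguments. Unset Strict Implicit. Unset Printing Implicit Defensive.
Import Order.TTheory GRing.Theory Num.Theory.
Import numFieldNormedType.Exports.
Local Open Scope ring_scope.

Section Generic.
Variables (R : realType) (T : finType) (S P : T -> T).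
Hypotheses (SK : cancel S P) (PK : cancel P S).

Lemma sum_shift (f : T -> R) : \sum_x f (S x) = \sum_x f x.
Proof. by rewrite [RHS](reindex_inj (can_inj SK)). Qed.

Lemma sum_eq0_diff (f g : T -> R) : \sum_x f x = \sum_x g x ->
  \sum_x (f x - g x) = 0.
Proof. by move=> e; rewrite sumrB e subrr. Qed.

Lemma green1 (u v : T -> R) :
  \sum_x v x * (u (S x) + u (P x) - 2 * u x) =
  - \sum_x (v (S x) - v x) * (u (S x) - u x).
Proof.
apply/eqP; rewrite -subr_eq0 opprK -big_split /=.
rewrite (eq_bigr (fun x => (v x * u (P x) - v (S x) * u x) +
    (v (S x) * u (S x) - v x * u x))); last by move=> x _; ring.
rewrite big_split /= !sum_eq0_diff ?addr0 //.
  by rewrite -(sum_shift (fun x => v x * u x)).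
by rewrite -(sum_shift (fun x => v x * u (P x))); apply: eq_bigr => x _; rewrite SK.
Qed.

End Generic.

Section Grid.
Variables (R : realType) (n : nat).
Local Notation N := n.+1.
Definition I := ('I_N * 'I_N * 'I_N)%type.
Definition S1 (x : I) : I := (ordS x.1.1, x.1.2, x.2).
Definition P1 (x : I) : I := (ord_pred x.1.1, x.1.2, x.2).
Definition S2 (x : I) : I := (x.1.1, ordS x.1.2, x.2).
Definition P2 (x : I) : I := (x.1.1, ord_pred x.1.2, x.2).
Definition S3 (x : I) : I := (x.1.1, x.1.2, ordS x.2).
Definition P3 (x : I) : I := (x.1.1, x.1.2, ord_pred x.2).
Lemma S1K : cancel S1 P1. Proof. by case=> [[i j] k]; rewrite /S1 /P1 /= ordSK. Qed.
Lemma P1K : cancel P1 S1. Proof. by case=> [[i j] k]; rewrite /S1 /P1 /= ord_predK. Qed.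
Lemma S2K : cancel S2 P2. Proof. by case=> [[i j] k]; rewrite /S2 /P2 /= ordSK. Qed.
Lemma P2K : cancel P2 S2. Proof. by case=> [[i j] k]; rewrite /S2 /P2 /= ord_predK. Qed.
Lemma S3K : cancel S3 P3. Proof. by case=> [[i j] k]; rewrite /S3 /P3 /= ordSK. Qed.
Lemma P3K : cancel P3 S3. Proof. by case=> [[i j] k]; rewrite /S3 /P3 /= ord_predK. Qed.

Definition fld := I -> R.
Definition gr (u : fld) : grid R N := fun i j k => u (i, j, k).
Definition fg (g : grid R N) : fld := fun x => g x.1.1 x.1.2 x.2.

Definition lapf (h : R) (u : fld) (x : I) : R :=
  h ^- 2 * ((u (S1 x) + u (P1 x) - 2 * u x) + (u (S2 x) + u (P2 x) - 2 * u x)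
          + (u (S3 x) + u (P3 x) - 2 * u x)).

Lemma lapfE h (g : grid R N) i j k : lap_h h g i j k = lapf h (fg g) (i, j, k).
Proof. rewrite /lap_h /lapf /fg /=; congr (_ * _); ring. Qed.

Definition gradsq (v u : fld) : R :=
  \sum_x ((v (S1 x) - v x) * (u (S1 x) - u x) + (v (S2 x) - v x) * (u (S2 x) - u x)
         + (v (S3 x) - v x) * (u (S3 x) - u x)).

Lemma green h (u v : fld) : \sum_x v x * lapf h u x = - (h ^- 2 * gradsq v u).
Proof.
rewrite /lapf (eq_bigr (fun x => h ^- 2 * (v x * (u (S1 x) + u (P1 x) - 2 * u x)
   + v x * (u (S2 x) + u (P2 x) - 2 * u x) + v x * (u (S3 x) + u (P3 x) - 2 * u x))));
  last by move=> x _; ring.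
rewrite -mulr_sumr !big_split /= (green1 S1K) (green1 S2K) (green1 S3K).
rewrite /gradsq !big_split /=; ring.
Qed.

Lemma gradsq_sym (u v : fld) : gradsq u v = gradsq v u.
Proof. by apply: eq_bigr => x _; ring. Qed.

Lemma lapf_sym h (u v : fld) : \sum_x v x * lapf h u x = \sum_x u x * lapf h v x.
Proof. by rewrite !green gradsq_sym. Qed.

Lemma sum_lapf h (u : fld) : \sum_x lapf h u x = 0.
Proof.
rewrite (eq_bigr (fun x => (fun _ => 1) x * lapf h u x)); last by move=> x _; rewrite mul1r.
rewrite green /gradsq big1 ?mulr0 ?oppr0 // => x _; rewrite !subrr; ring.
Qed.

Lemma gradsq_ge0 (u : fld) : 0 <= gradsq u u.
Proof.
by apply: sumr_ge0 => x _; rewrite -!expr2 !addr_ge0 // sqr_ge0.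
Qed.

Lemma lapf_nonpos h (u : fld) : \sum_x u x * lapf h u x <= 0.
Proof.
rewrite green oppr_le0 mulr_ge0 ?gradsq_ge0 //.
by rewrite invr_ge0 sqr_ge0.
Qed.

Lemma ordS_val (i : 'I_N) : val (ordS i) = (i.+1 %% N)%N.
Proof. by []. Qed.

Lemma iter_ordS k : val (iter k (@ordS N) ord0) = (k %% N)%N.
Proof.
elim: k => [|k IH] /=; first by rewrite mod0n.
by move: IH; rewrite /ordS /= => ->; rewrite -addn1 modnDml addn1.
Qed.

Lemma ordS_inv (f : 'I_N -> R) : (forall i, f (ordS i) = f i) -> forall i, f i = f ord0.
Proof.
move=> H i.
have -> : i = iter i (@ordS N) ord0.
  by apply: val_inj; rewrite iter_ordS modn_small.
by elim: (nat_of_ord i) => [|k IH] //=; rewrite H.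
Qed.

Lemma lapf_ker h (u : fld) : h != 0 -> (forall x, lapf h u x = 0) ->
  forall x, u x = u (ord0, ord0, ord0).
Proof.
move=> h0 H.
have : gradsq u u = 0.
  have := green h u u; rewrite big1 ?[in X in X -> _]/= => [|x _]; last by rewrite H mulr0.
  move/eqP; rewrite eq_sym oppr_eq0 mulf_eq0 invr_eq0 expf_eq0 /= (negbTE h0) /=.
  by move/eqP.
move/eqP; rewrite psumr_eq0; last first.
  by move=> x _; rewrite -!expr2 !addr_ge0 // sqr_ge0.
move/allP => Hall.
have Hx : forall x, u (S1 x) = u x /\ u (S2 x) = u x /\ u (S3 x) = u x.
  move=> x; have := Hall x (mem_index_enum x); rewrite implyTb -!expr2.
  set a := _ ^+ 2; set b := _ ^+ 2; set c := _ ^+ 2 => Habc.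
  have a0 : 0 <= a by exact: sqr_ge0.
  have b0 : 0 <= b by exact: sqr_ge0.
  have c0 : 0 <= c by exact: sqr_ge0.
  move: Habc; rewrite paddr_eq0 ?addr_ge0 // paddr_eq0 //.
  case/andP => /andP [/eqP ea /eqP eb] /eqP ec.
  move: ea eb ec; rewrite /a /b /c => /eqP; rewrite sqrf_eq0 subr_eq0 => /eqP ->.
  by move=> /eqP; rewrite sqrf_eq0 subr_eq0 => /eqP -> /eqP; rewrite sqrf_eq0 subr_eq0 => /eqP ->.
case=> [[i j] k].
rewrite (ordS_inv (f := fun a => u (a, j, k))); last by move=> a; case: (Hx (a, j, k)).
rewrite (ordS_inv (f := fun a => u (ord0, a, k))); last by move=> a; case: (Hx (ord0, a, k)) => _ [].
rewrite (ordS_inv (f := fun a => u (ord0, ord0, a))) //; by move=> a; case: (Hx (ord0, ord0, a)) => _ [].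
Qed.

End Grid.

Section Entropy.
Variable R : realType.
Implicit Types x y z w t : R.

Definition Fn (x : R) : R := ln (1 + x) - ln (1 - x).
Definition xlnx (z : R) : R := z * ln z.
Definition Gn (x : R) : R := xlnx (1 + x) + xlnx (1 - x).

Lemma ln_le_sub1 (z : R) : 0 < z -> ln z <= z - 1.
Proof.
move=> z0; have := @le_ln1Dx R (z - 1); rewrite addrCA subrr addr0; apply.
lra.
Qed.

Lemma xlnx_helper (a b : R) : 0 <= a -> 0 < b -> a - b <= a * ln a - a * ln b.
Proof.
rewrite le_eqVlt => /orP [/eqP <- b0|a0 b0]; first by rewrite !mul0r subrr sub0r oppr_le0 ltW.
have : ln (b / a) <= b / a - 1 by apply: ln_le_sub1; rewrite divr_gt0.
rewrite ln_div ?posrE // => H.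
have H2 := ler_wpM2l (ltW a0) H.
have e : a * (b / a - 1) = b - a by field; rewrite gt_eqF.
rewrite e in H2; rewrite -subr_ge0.
have -> : a * ln a - a * ln b - (a - b) = (b - a) - a * (ln b - ln a) by ring.
by rewrite subr_ge0.
Qed.

Lemma Gn_tangent (x y : R) : -1 < y -> y < 1 -> -1 <= x -> x <= 1 ->
  Gn y + Fn y * (x - y) <= Gn x.
Proof.
move=> y1 y2 x1 x2.
have d : 0 <= 1 + x by lra.
have c : 0 <= 1 - x by lra.
have b : 0 < 1 + y by lra.
have a : 0 < 1 - y by lra.
have A := xlnx_helper d b; have B := xlnx_helper c a.
rewrite -subr_ge0 in A; rewrite -subr_ge0 in B; rewrite -subr_ge0.
have -> : Gn x - (Gn y + Fn y * (x - y)) =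
  ((1 + x) * ln (1 + x) - (1 + x) * ln (1 + y) - (1 + x - (1 + y))) +
  ((1 - x) * ln (1 - x) - (1 - x) * ln (1 - y) - (1 - x - (1 - y))).
  rewrite /Gn /Fn /xlnx; ring.
exact: addr_ge0.
Qed.

Lemma ln_diff_le (z w : R) : 0 < z -> 0 < w -> ln w - ln z <= (w - z) / z.
Proof.
move=> z0 w0; rewrite -ln_div ?posrE //.
apply: le_trans (ln_le_sub1 _) _; first by rewrite divr_gt0.
by rewrite mulrBl divff ?gt_eqF.
Qed.

Lemma ln_lip (z w c : R) : 0 < c -> c <= z -> c <= w -> `|ln w - ln z| <= `|w - z| / c.
Proof.
move=> c0 cz cw.
have z0 : 0 < z by apply: lt_le_trans cz.
have w0 : 0 < w by apply: lt_le_trans cw.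
have key : forall p q, 0 < p -> c <= p -> 0 < q -> ln q - ln p <= `|q - p| / c.
  move=> p q p0 cp q0; apply: le_trans (ln_diff_le p0 q0) _.
  apply: (@le_trans _ _ (`|q - p| / p)).
    by rewrite ler_pM2r ?invr_gt0 // ler_norm.
  apply: ler_wpM2l; first exact: normr_ge0.
  by rewrite lef_pV2 ?posrE.
rewrite ler_norml; apply/andP; split; last exact: key.
by rewrite lerNl opprB distrC; apply: key.
Qed.

Lemma Fn_lip (x t : R) : `|x| < 1 -> `|t| <= (1 - `|x|) / 2 ->
  `|Fn (x + t) - Fn x| <= `|t| * (4 / (1 - `|x|)).
Proof.
move=> x1 tb.
set d := 1 - `|x|.
have d0 : 0 < d by rewrite /d subr_gt0.
have hx := ler_norm x; have hx' := ler_normr x.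
have hxn : - x <= `|x| by rewrite -normrN ler_norm.
have ht : t <= `|t| by rewrite ler_norm.
have htn : - t <= `|t| by rewrite -normrN ler_norm.
have c0 : 0 < d / 2 by rewrite divr_gt0.
have l1 := @ln_lip (1 + x) (1 + x + t) (d / 2) c0.
have l2 := @ln_lip (1 - x) (1 - (x + t)) (d / 2) c0.
have e1 : d / 2 <= 1 + x by rewrite /d; lra.
have e2 : d / 2 <= 1 + x + t by rewrite /d; move: tb; rewrite /d; lra.
have e3 : d / 2 <= 1 - x by rewrite /d; lra.
have e4 : d / 2 <= 1 - (x + t) by move: tb; rewrite /d; lra.
move: (l1 e1 e2) (l2 e3 e4).
rewrite /Fn addrA.
have -> : 1 + x + t - (1 + x) = t by ring.
have -> : 1 - (x + t) - (1 - x) = - t by ring.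
rewrite normrN => A B.
have -> : ln (1 + x + t) - ln (1 - (x + t)) - (ln (1 + x) - ln (1 - x)) =
  (ln (1 + x + t) - ln (1 + x)) - (ln (1 - (x + t)) - ln (1 - x)) by ring.
apply: le_trans (ler_normB _ _) _.
have -> : `|t| * (4 / d) = `|t| / (d / 2) + `|t| / (d / 2).
  field; rewrite gt_eqF //.
exact: lerD.
Qed.

Lemma Fn_lt (x y : R) : -1 < x -> x < y -> y < 1 -> Fn x < Fn y.
Proof.
move=> x1 xy y1; rewrite /Fn.
have a : ln (1 + x) < ln (1 + y) by rewrite ltr_ln ?posrE; lra.
have b : ln (1 - y) < ln (1 - x) by rewrite ltr_ln ?posrE; lra.
lra.
Qed.

Lemma Fn_le (x y : R) : -1 < x -> x <= y -> y < 1 -> Fn x <= Fn y.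
Proof.
move=> x1; rewrite le_eqVlt => /orP [/eqP -> //|xy] y1.
exact/ltW/Fn_lt.
Qed.

Lemma Fn_near1 (s : R) : 0 < s -> s <= 1 -> - ln s <= Fn (1 - s).
Proof.
move=> s0 s1; rewrite /Fn.
have -> : 1 - (1 - s) = s by ring.
have : 0 <= ln (1 + (1 - s)) by apply: ln_ge0; lra.
lra.
Qed.

Lemma GnN (x : R) : Gn (- x) = Gn x.
Proof. by rewrite /Gn opprK addrC. Qed.

Lemma sign_lemma (E : R -> R) c C tau : 0 < tau -> 0 < C ->
  (forall t, `|t| <= tau -> 0 <= t * E t) ->
  (forall t, `|t| <= tau -> `|E t - c| <= C * `|t|) -> c = 0.
Proof.
move=> tau0 C0 H1 H2.
case: (ltgtP c 0) => // hc.
- pose t := Num.min tau (- c / (2 * C)).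
  have t0 : 0 < t by rewrite lt_min tau0 divr_gt0 ?oppr_gt0 ?mulr_gt0.
  have tt : `|t| <= tau by rewrite gtr0_norm // ge_min lexx.
  have tc : t <= - c / (2 * C) by rewrite ge_min lexx orbT.
  have := H1 t tt; have := H2 t tt; rewrite (gtr0_norm t0) ler_norml => /andP [_ h].
  move: tc; rewrite ler_pdivlMr ?mulr_gt0 // => tc.
  have hE : E t < 0 by nra.
  move=> h1; have : t * E t < 0 by rewrite pmulr_rlt0.
  by rewrite ltNge h1.
- pose t := Num.min tau (c / (2 * C)).
  have t0 : 0 < t by rewrite lt_min tau0 divr_gt0 ?mulr_gt0.
  have tt : `|- t| <= tau by rewrite normrN gtr0_norm // ge_min lexx.
  have tc : t <= c / (2 * C) by rewrite ge_min lexx orbT.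
  have := H1 (- t) tt; have := H2 (- t) tt; rewrite normrN (gtr0_norm t0) ler_norml => /andP [h _].
  move: tc; rewrite ler_pdivlMr ?mulr_gt0 // => tc.
  have hE : 0 < E (- t) by nra.
  move=> h1; have : - t * E (- t) < 0 by rewrite mulNr oppr_lt0 mulr_gt0.
  by rewrite ltNge h1.
Qed.

End Entropy.

Section Core.
Variable R : realType.

Definition Phi (x y l k t : R) := Gn (x + t) + Gn (y - t) + l * t + k * t ^+ 2.

Definition isMin (x y l k : R) := forall t : R, -1 <= x + t -> x + t <= 1 ->
  -1 <= y - t -> y - t <= 1 -> Phi x y l k 0 <= Phi x y l k t.

Lemma bnd1 (y l k : R) : -1 <= y -> y < 1 -> ~ isMin 1 y l k.
Proof.
move=> y1 y2 Hm.
pose b := (1 + y) / 2.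
pose K := Fn b + `|l| + `|k|.
pose s := Num.min (Num.min ((1 - y) / 2) 1) (expR (- (`|K| + 1))).
have s0 : 0 < s.
  rewrite /s !lt_min expR_gt0 ltr01 andbT divr_gt0 //; lra.
have s1 : s <= 1 by rewrite /s !ge_min lexx orbT.
have s2 : s <= (1 - y) / 2 by rewrite /s !ge_min lexx.
have s3 : s <= expR (- (`|K| + 1)) by rewrite /s !ge_min lexx !orbT.
have := Hm (- s); rewrite /Phi.
have e1 : -1 <= 1 + - s by lra.
have e2 : 1 + - s <= 1 by lra.
have e3 : -1 <= y - - s by lra.
have e4 : y - - s <= 1 by lra.
move=> /(_ e1 e2 e3 e4).
have t1 := @Gn_tangent R 1 (1 - s).
have t2 := @Gn_tangent R y (y + s).
have f1 : -1 < 1 - s by lra.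
have f2 : 1 - s < 1 by lra.
have f3 : -1 < y + s by lra.
have f4 : y + s < 1 by lra.
have g1 : -1 <= (1 : R) by lra.
have g2 : (1 : R) <= 1 by lra.
have g3 : -1 <= y by lra.
have g4 : y <= 1 by lra.
move: (t1 f1 f2 g1 g2) (t2 f3 f4 g3 g4).
have -> : (1 : R) - (1 - s) = s by ring.
have -> : y - (y + s) = - s by ring.
have -> : (1 : R) + - s = 1 - s by ring.
have -> : y - - s = y + s by ring.
have -> : (1 : R) + 0 = 1 by ring.
have -> : y - 0 = y by ring.
have hb : Fn (y + s) <= Fn b by apply: Fn_le => //; rewrite /b; lra.
have hl : Fn (1 - s) >= `|K| + 1.
  apply: le_trans (Fn_near1 s0 s1); rewrite lerNr.
  rewrite -(expRK (- (`|K| + 1))) ler_ln ?posrE ?expR_gt0 //.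
have hK : K <= `|K| by exact: ler_norm.
have hl' : - l <= `|l| by rewrite -normrN ler_norm.
have hk : k <= `|k| by exact: ler_norm.
have hks : k * s <= `|k|.
  have := normr_ge0 k; have : k * s <= `|k| * s by rewrite ler_pM2r.
  have : `|k| * s <= `|k| by rewrite ler_piMr ?normr_ge0.
  lra.
have key : - Fn (1 - s) + Fn (y + s) - l + k * s < 0.
  move: hb hl hK hl' hks; rewrite /K.
  move: (k * s) (Fn b) (Fn (1 - s)) (Fn (y + s)) (`|Fn b + `|l| + `|k| | : R).
  move=> ks fb A B nK; lra.
move=> T1 T2 H.
have : 0 <= s * (- Fn (1 - s) + Fn (y + s) - l + k * s).
  have -> : s * (- Fn (1 - s) + Fn (y + s) - l + k * s) =
     - (Fn (1 - s) * s) - (Fn (y + s) * - s) - l * s + k * (s * s) by ring.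
  have E1 : l * - s = - (l * s) by ring.
  have E2 : k * (- s) ^+ 2 = k * (s * s) by ring.
  have E3 : l * 0 = 0 by ring.
  have E4 : k * 0 ^+ 2 = 0 by ring.
  move: T1 T2 H E1 E2 E3 E4.
  move: (l * - s) (k * (- s) ^+ 2) (l * 0) (k * 0 ^+ 2) => c1 c2 c3 c4.
  move: (Fn (1 - s) * s) (Fn (y + s) * - s) (l * s) (k * (s * s)) => a1 a2 a3 a4.
  move: (Gn 1) (Gn y) (Gn (1 - s)) (Gn (y + s)) => b1 b2 b3 b4; lra.
by rewrite leNgt pmulr_rlt0 ?key.
Qed.

Lemma bnd2 (y l k : R) : -1 < y -> y <= 1 -> ~ isMin (-1) y l k.
Proof.
move=> y1 y2 Hm; apply: (@bnd1 (- y) (- l) k); try lra.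
move=> t a b c d; have := Hm (- t).
have e1 : -1 <= -1 + - t by lra.
have e2 : -1 + - t <= 1 by lra.
have e3 : -1 <= y - - t by lra.
have e4 : y - - t <= 1 by lra.
move=> /(_ e1 e2 e3 e4); rewrite /Phi.
rewrite -(GnN (-1 + 0)) -(GnN (y - 0)) -(GnN (-1 + - t)) -(GnN (y - - t)).
have -> : - (-1 + 0) = (1 : R) + 0 by ring.
have -> : - (y - 0) = - y - 0 by ring.
have -> : - (-1 + - t) = (1 : R) + t by ring.
have -> : - (y - - t) = - y - t by ring.
have -> : l * 0 = - l * 0 by ring.
have -> : l * - t = - l * t by ring.
by have -> : (- t) ^+ 2 = t ^+ 2 by ring.
Qed.

Lemma foc (x y l k : R) : -1 < x -> x < 1 -> -1 < y -> y < 1 -> isMin x y l k ->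
  Fn x - Fn y + l = 0.
Proof.
move=> x1 x2 y1 y2 Hm.
have ax : `|x| < 1 by rewrite ltr_norml x1.
have ay : `|y| < 1 by rewrite ltr_norml y1.
pose dx := 1 - `|x|. pose dy := 1 - `|y|.
have dx0 : 0 < dx by rewrite /dx subr_gt0.
have dy0 : 0 < dy by rewrite /dy subr_gt0.
pose tau := Num.min dx dy / 2.
have tau0 : 0 < tau by rewrite /tau divr_gt0 // lt_min dx0.
have hm1 : Num.min dx dy <= dx by rewrite ge_min lexx.
have hm2 : Num.min dx dy <= dy by rewrite ge_min lexx orbT.
have taux : tau <= dx / 2 by move: hm1; rewrite /tau; move: (Num.min dx dy) => m; lra.
have tauy : tau <= dy / 2 by move: hm2; rewrite /tau; move: (Num.min dx dy) => m; lra.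
pose C := 4 / dx + 4 / dy + `|k| + 1.
have C0 : 0 < C.
  rewrite /C; have := normr_ge0 k; have : 0 < 4 / dx by rewrite divr_gt0.
  have : 0 < 4 / dy by rewrite divr_gt0.
  move: (4 / dx) (4 / dy) `|k| => p q r; lra.
apply: (@sign_lemma R (fun t => Fn (x + t) - Fn (y - t) + l + k * t) _ C tau tau0 C0).
- move=> t tt.
  have hx := ler_norm x; have hx' : - x <= `|x| by rewrite -normrN ler_norm.
  have hy := ler_norm y; have hy' : - y <= `|y| by rewrite -normrN ler_norm.
  have ht := ler_norm t; have ht' : - t <= `|t| by rewrite -normrN ler_norm.
  have f1 : -1 < x + t by move: taux tauy; rewrite /dx /dy; lra.
  have f2 : x + t < 1 by move: taux tauy; rewrite /dx /dy; lra.
  have f3 : -1 < y - t by move: taux tauy; rewrite /dx /dy; lra.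
  have f4 : y - t < 1 by move: taux tauy; rewrite /dx /dy; lra.
  have H := Hm t (ltW f1) (ltW f2) (ltW f3) (ltW f4).
  have T1 := Gn_tangent f1 f2 (ltW x1) (ltW x2).
  have T2 := Gn_tangent f3 f4 (ltW y1) (ltW y2).
  move: H T1 T2; rewrite /Phi.
  have -> : t * (Fn (x + t) - Fn (y - t) + l + k * t) =
     - (Fn (x + t) * (x - (x + t))) - Fn (y - t) * (y - (y - t)) + l * t + k * t ^+ 2 by ring.
  have E3 : l * 0 = 0 by ring.
  have E4 : k * 0 ^+ 2 = 0 by ring.
  rewrite addr0 subr0.
  move: E3 E4; move: (l * 0) (k * 0 ^+ 2) => c3 c4.
  move: (Fn (x + t) * (x - (x + t))) (Fn (y - t) * (y - (y - t))) (l * t) (k * t ^+ 2) => a1 a2 a3 a4.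
  move: (Gn x) (Gn y) (Gn (x + t)) (Gn (y - t)) => b1 b2 b3 b4; lra.
- move=> t tt.
  have L1 : `|Fn (x + t) - Fn x| <= `|t| * (4 / dx).
    apply: Fn_lip => //; apply: le_trans tt _; exact: taux.
  have L2 : `|Fn (y + - t) - Fn y| <= `|- t| * (4 / dy).
    apply: Fn_lip => //; rewrite normrN; apply: le_trans tt _; exact: tauy.
  rewrite normrN in L2.
  have -> : Fn (x + t) - Fn (y - t) + l + k * t - (Fn x - Fn y + l) =
    (Fn (x + t) - Fn x) - (Fn (y + - t) - Fn y) + k * t by ring.
  apply: le_trans (ler_normD _ _) _.
  apply: le_trans (lerD (ler_normB _ _) (lexx _)) _.
  rewrite normrM.
  have -> : C * `|t| = `|t| * (4 / dx) + `|t| * (4 / dy) + `|k| * `|t| + `|t| by rewrite /C; ring.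
  have := normr_ge0 t.
  move: L1 L2; move: (`|t| * (4 / dx)) (`|t| * (4 / dy)) (`|k| * `|t|).
  move: `|Fn (x + t) - Fn x| `|Fn (y + - t) - Fn y| => p q r s u; lra.
Qed.

End Core.

Section ScopeW5.
Local Open Scope classical_set_scope.
Section Cont.
Variable R : realType.

Lemma cont_eps (f : R -> R) (x : R) :
  (forall e : R, 0 < e -> exists2 d : R, 0 < d & forall y, `|x - y| < d -> `|f x - f y| < e) ->
  {for x, continuous f}.
Proof.
move=> H; apply/cvgrPdist_lt => e e0.
have [d d0 Hd] := H e e0.
apply/nbhs_ballP; exists d => //= y; rewrite -ball_normE /ball_norm /=.
Qed.

Lemma xlnx_le0 (y : R) : y <= 0 -> xlnx y = 0.
Proof. by move=> y0; rewrite /xlnx ln0 // mulr0. Qed.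

Lemma xlnx_bound (y : R) : 0 < y -> y <= 1 -> `|xlnx y| <= 2 * Num.sqrt y.
Proof.
move=> y0 y1.
have sy0 : 0 < Num.sqrt y by rewrite sqrtr_gt0.
have ey : y = Num.sqrt y ^+ 2 by rewrite sqr_sqrtr // ltW.
have lnle : ln y <= 0 by apply: ln_le0.
have lnge : 2 * (1 - (Num.sqrt y)^-1) <= ln y.
  rewrite [in X in _ <= ln X]ey (@lnXn R 2 _ sy0) mulr2n.
  have si : 0 < (Num.sqrt y)^-1 by rewrite invr_gt0.
  have := ln_le_sub1 si.
  rewrite lnV ?posrE //; move: (ln (Num.sqrt y)) ((Num.sqrt y)^-1) => a b; lra.
have hp : y * ln y <= 0 by rewrite mulr_ge0_le0 // ltW.
rewrite /xlnx ler0_norm //.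
have : y * (2 * (1 - (Num.sqrt y)^-1)) <= y * ln y by rewrite ler_pM2l.
have -> : y * (2 * (1 - (Num.sqrt y)^-1)) = 2 * y - 2 * Num.sqrt y.
  have e2 : y * (Num.sqrt y)^-1 = Num.sqrt y by rewrite {1}ey expr2 mulfK ?gt_eqF.
  rewrite -[in RHS]e2; ring.
have := ltW y0; lra.
Qed.

Lemma xlnx_cont : continuous (@xlnx R).
Proof.
move=> x.
case: (ltgtP x 0) => hx.
- apply: cont_eps => e e0; exists (- x); first by rewrite oppr_gt0.
  move=> y hy; rewrite !xlnx_le0 ?subrr ?normr0 // ?(ltW hx) //.
  move: hy; rewrite ltr_norml; lra.
- apply: continuousM; first exact: cvg_id.
  exact: continuous_ln.
- rewrite hx; apply: cont_eps => e e0.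
  exists (Num.min 1 ((e / 2) ^+ 2)); first by rewrite lt_min ltr01 exprn_gt0 // divr_gt0.
  move=> y; rewrite sub0r normrN => hy.
  rewrite xlnx_le0 // sub0r normrN.
  case: (leP y 0) => y0; first by rewrite xlnx_le0 // normr0.
  have hy1 : y <= 1 by move: hy; rewrite gtr0_norm // lt_min => /andP [/ltW].
  have hy2 : y < (e / 2) ^+ 2 by move: hy; rewrite gtr0_norm // lt_min => /andP [_].
  apply: le_lt_trans (xlnx_bound y0 hy1) _.
  have : Num.sqrt y < e / 2.
    by rewrite -(ltr_pXn2r (_ : (0 < 2)%N)) ?sqr_sqrtr ?ltW // ?nnegrE ?sqrtr_ge0 ?divr_ge0 ?ltW.
  lra.
Qed.

Lemma Gn_cont : continuous (@Gn R).
Proof.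
move=> x; rewrite /Gn; apply: cvgD.
- have := @continuous_comp R R R (fun z : R => 1 + z) (@xlnx R) x; apply; last exact: xlnx_cont.
  apply: cvgD; [exact: cvg_cst | exact: cvg_id].
- have := @continuous_comp R R R (fun z : R => 1 - z) (@xlnx R) x; apply; last exact: xlnx_cont.
  apply: cvgB; [exact: cvg_cst | exact: cvg_id].
Qed.

End Cont.

End ScopeW5.

Section LinAlg.
Variables (R : realType) (n : nat).
Local Notation I := (I n).
Local Notation fld := (fld R n).
Local Notation nI := #|{: I}|.

Definition fieldv (v : 'rV[R]_nI) : fld := fun x => v ord0 (enum_rank x).
Definition vecf (u : fld) : 'rV[R]_nI := \row_p u (enum_val p).

Lemma fieldvK u x : fieldv (vecf u) x = u x.
Proof. by rewrite /fieldv /vecf mxE enum_rankK. Qed.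

Lemma vecfK v : vecf (fieldv v) = v.
Proof. by apply/rowP => p; rewrite /fieldv /vecf mxE enum_valK; congr (v _ _); apply/val_inj; case: ord0; case. Qed.

Lemma sum_enum (F : 'I_nI -> R) : \sum_p F p = \sum_(x : I) F (enum_rank x).
Proof. exact: (reindex enum_rank (onW_bij _ (enum_rank_bij _))). Qed.

Lemma lapf_ext h (u v : fld) y : (forall x, u x = v x) -> lapf h u y = lapf h v y.
Proof. by move=> e; rewrite /lapf !e. Qed.

Lemma lapf_lin h (r : seq 'I_nI) (c : 'I_nI -> R) (w : 'I_nI -> fld) y :
  lapf h (fun x => \sum_(p <- r) c p * w p x) y = \sum_(p <- r) c p * lapf h (w p) y.
Proof.
elim: r => [|p r IH].
  rewrite big_nil (@lapf_ext h _ (fun _ => 0)); first by rewrite /lapf; ring.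
  by move=> x; rewrite big_nil.
rewrite big_cons -IH (@lapf_ext h _ (fun x => c p * w p x + \sum_(j <- r) c j * w j x)); last first.
  by move=> x; rewrite big_cons.
rewrite /lapf; ring.
Qed.

Definition Amat h : 'M[R]_nI := \matrix_(p, q) lapf h (fieldv (delta_mx 0 p)) (enum_val q).

Lemma mulA h v : v *m Amat h = vecf (lapf h (fieldv v)).
Proof.
apply/rowP => q; rewrite !mxE.
rewrite (@lapf_ext h _ (fun x => \sum_(p <- index_enum _) v ord0 p * fieldv (delta_mx 0 p) x)).
  by rewrite lapf_lin; apply: eq_bigr => p _; rewrite mxE.
move=> x; rewrite /fieldv (bigD1 (enum_rank x)) //= mxE !eqxx mulr1 big1 ?addr0 //.
by move=> p np; rewrite mxE [enum_rank x == p]eq_sym (negbTE np) andbF mulr0.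
Qed.

Definition ONE : 'M[R]_(nI, 1) := const_mx 1.

Lemma mulONE (v : 'rV[R]_nI) : (v *m ONE) ord0 ord0 = \sum_x fieldv v x.
Proof.
rewrite mxE sum_enum; apply: eq_bigr => x _; rewrite mxE mulr1 /fieldv.
by congr (v _ _); apply/val_inj; case: ord0; case.
Qed.

Lemma nI_gt0 : (0 < nI)%N.
Proof. by rewrite !card_prod card_ord !muln_gt0. Qed.

Lemma rank_ONE : \rank ONE = 1%N.
Proof.
apply/eqP; rewrite eqn_leq rank_leq_col /= lt0n mxrank_eq0.
apply/eqP => /matrixP /(_ (Ordinal nI_gt0) ord0); rewrite !mxE => /eqP.
by rewrite oner_eq0.
Qed.

Lemma Amat_sub h : (Amat h <= kermx ONE)%MS.
Proof.
rewrite sub_kermx; apply/eqP/matrixP => p j; rewrite mxE [RHS]mxE.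
rewrite (eq_bigr (fun q => lapf h (fieldv (delta_mx 0 p)) (enum_val q))); last first.
  by move=> q _; rewrite !mxE mulr1.
rewrite sum_enum (eq_bigr (fun x => lapf h (fieldv (delta_mx 0 p)) x)).
  exact: sum_lapf.
by move=> x _; rewrite enum_rankK.
Qed.

Lemma ker_sub h : h != 0 -> (kermx (Amat h) <= ONE^T)%MS.
Proof.
move=> h0; apply/row_subP => i.
have hr : row i (kermx (Amat h)) *m Amat h = 0 by rewrite -row_mul mulmx_ker row0.
move: (row i _) hr => r hr.
have hl : forall x, lapf h (fieldv r) x = 0.
  move=> x; rewrite -fieldvK -mulA hr /fieldv mxE //.
have := lapf_ker h0 hl => hc.
have -> : r = (fieldv r (ord0, ord0, ord0)) *: ONE^T.
  apply/rowP => p; rewrite !mxE mulr1.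
  have := hc (enum_val p); rewrite /fieldv enum_valK => <-.
  by congr (r _ _); apply/val_inj; case: ord0; case.
exact: scalemx_sub.
Qed.

Lemma rank_Amat h : h != 0 -> (nI - 1 <= \rank (Amat h))%N.
Proof.
move=> h0.
have k1 : (\rank (kermx (Amat h)) <= 1)%N.
  apply: leq_trans (mxrankS (ker_sub h0)) _.
  by rewrite mxrank_tr rank_ONE.
move: k1; rewrite mxrank_ker.
have := rank_leq_row (Amat h); lia.
Qed.

Lemma kerONE_sub h : h != 0 -> (kermx ONE <= Amat h)%MS.
Proof.
move=> h0; rewrite -(mxrank_leqif_sup (Amat_sub h)).2 eqn_leq.
rewrite mxrankS ?Amat_sub //= mxrank_ker rank_ONE.
exact: rank_Amat.
Qed.

Lemma lap_surj h : h != 0 -> exists B : 'M[R]_nI,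
  forall f : fld, \sum_x f x = 0 -> forall x, lapf h (fieldv (vecf f *m B)) x = f x.
Proof.
move=> h0; exists (pinvmx (Amat h)) => f f0 x.
have s1 : (vecf f <= kermx ONE)%MS.
  rewrite sub_kermx; apply/eqP/matrixP => i j.
  rewrite !ord1 mulONE mxE (eq_bigr f) // => y _; exact: fieldvK.
have s2 : (vecf f <= Amat h)%MS := submx_trans s1 (kerONE_sub h0).
rewrite -fieldvK -mulA mulmxKpV //; exact: fieldvK.
Qed.

End LinAlg.

Section Expand.
Variables (R : realType) (n : nat).
Local Notation I := (I n).
Local Notation fld := (fld R n).
Local Notation nI := #|{: I}|.
Variables (h dt eps th : R) (phi0 : fld) (B : 'M[R]_nI).
Hypothesis hB : forall f : fld, \sum_x f x = 0 -> forall x, lapf h (fieldv (vecf f *m B)) x = f x.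

Definition U (f : fld) : fld := fieldv (vecf f *m B).

Lemma U_lin (f d : fld) t x : U (fun y => f y + t * d y) x = U f x + t * U d x.
Proof.
rewrite /U /fieldv !mxE mulr_sumr -big_split /=; apply: eq_bigr => p _; rewrite !mxE; ring.
Qed.

Lemma lapf_lin2 (u d : fld) t x : lapf h (fun y => u y + t * d y) x = lapf h u x + t * lapf h d x.
Proof. rewrite /lapf; ring. Qed.

Lemma U_sym (f d : fld) : \sum_x f x = 0 -> \sum_x d x = 0 ->
  \sum_x d x * U f x = \sum_x f x * U d x.
Proof.
move=> f0 d0.
rewrite (eq_bigr (fun x => U f x * lapf h (U d) x)); last by move=> x _; rewrite /U hB // mulrC.
rewrite -lapf_sym; apply: eq_bigr => x _; by rewrite /U hB // mulrC.
Qed.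

Lemma sum4 (a b c e : fld) (t : R) :
  \sum_x (a x + t * b x + t * c x + t ^+ 2 * e x) =
  \sum_x a x + t * \sum_x b x + t * \sum_x c x + t ^+ 2 * \sum_x e x.
Proof. by rewrite !big_split /= -!mulr_sumr. Qed.

Definition Q (u : fld) : R :=
  - (dt^-1 / 2) * \sum_x (u x - phi0 x) * U (fun y => u y - phi0 y) x
  - th * \sum_x phi0 x * u x - eps ^+ 2 / 2 * \sum_x u x * lapf h u x.
Definition Jf (u : fld) : R := \sum_x Gn (u x) + Q u.
Definition V (u : fld) (x : I) : R :=
  - dt^-1 * U (fun y => u y - phi0 y) x - th * phi0 x - eps ^+ 2 * lapf h u x.
Definition kap (d : fld) : R :=
  - (dt^-1 / 2) * \sum_x d x * U d x - eps ^+ 2 / 2 * \sum_x d x * lapf h d x.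

Lemma Q_expand (u d : fld) t : \sum_x u x = \sum_x phi0 x -> \sum_x d x = 0 ->
  Q (fun x => u x + t * d x) = Q u + t * \sum_x d x * V u x + t ^+ 2 * kap d.
Proof.
move=> hu hd.
pose f : fld := fun y => u y - phi0 y.
have hf : \sum_x f x = 0 by rewrite /f sumrB hu subrr.
rewrite /Q /=.
have -> : (fun y => u y + t * d y - phi0 y) = (fun y => f y + t * d y).
  by apply: funext => y; rewrite /f; ring.
have e1 : \sum_x (u x + t * d x - phi0 x) * U (fun y => f y + t * d y) x =
   \sum_x f x * U f x + t * \sum_x d x * U f x + t * \sum_x f x * U d x
   + t ^+ 2 * \sum_x d x * U d x.
  rewrite -sum4; apply: eq_bigr => x _; rewrite U_lin /f; ring.
have e2 : \sum_x phi0 x * (u x + t * d x) = \sum_x phi0 x * u x + t * \sum_x phi0 x * d x.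
  rewrite mulr_sumr -big_split /=; apply: eq_bigr => x _; ring.
have e3 : \sum_x (u x + t * d x) * lapf h (fun y => u y + t * d y) x =
   \sum_x u x * lapf h u x + t * \sum_x d x * lapf h u x + t * \sum_x u x * lapf h d x
   + t ^+ 2 * \sum_x d x * lapf h d x.
  rewrite -sum4; apply: eq_bigr => x _; rewrite lapf_lin2; ring.
have e4 : \sum_x d x * V u x = - dt^-1 * \sum_x d x * U f x - th * \sum_x phi0 x * d x
   - eps ^+ 2 * \sum_x d x * lapf h u x.
  rewrite !mulr_sumr -!sumrB; apply: eq_bigr => x _; rewrite /V; ring.
rewrite e1 e2 e3 e4 (U_sym hf hd) (lapf_sym h u d).
have -> : (fun y => u y - phi0 y) = f by [].
have e5 : \sum_x (u x - phi0 x) * U f x = \sum_x f x * U f x by [].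
rewrite e5 /kap; clearbody f.
move: (\sum_x f x * U f x) (\sum_x f x * U d x) (\sum_x d x * U d x) (\sum_x phi0 x * u x) (\sum_x phi0 x * d x) (\sum_x u x * lapf h u x) (\sum_x u x * lapf h d x) (\sum_x d x * lapf h d x) => a1 a2 a3 a4 a5 a6 a7 a8.
move: (dt^-1) => q; by field.
Qed.

End Expand.

Section Dir.
Variables (R : realType) (n : nat).
Local Notation I := (I n).
Local Notation fld := (fld R n).
Local Notation nI := #|{: I}|.

Lemma sum_two (F : I -> R) a b : a != b -> (forall x, x != a -> x != b -> F x = 0) ->
  \sum_x F x = F a + F b.
Proof.
move=> ab H; rewrite (bigD1 a) //= (bigD1 b) /=; last by rewrite eq_sym.
rewrite big1 ?addr0 // => x /andP [xa xb]; exact: H.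
Qed.

Definition dab (a b : I) : fld := fun x => (x == a)%:R - (x == b)%:R.

Lemma dab_a a b : a != b -> dab a b a = 1.
Proof. by move=> ab; rewrite /dab eqxx (negbTE ab) subr0. Qed.
Lemma dab_b a b : a != b -> dab a b b = -1.
Proof. by move=> ab; rewrite /dab eqxx eq_sym (negbTE ab) sub0r. Qed.
Lemma dab_o a b x : x != a -> x != b -> dab a b x = 0.
Proof. by move=> xa xb; rewrite /dab (negbTE xa) (negbTE xb) subrr. Qed.

Lemma sum_dab a b : a != b -> \sum_x dab a b x = 0.
Proof.
move=> ab; rewrite (@sum_two _ a b) // ?dab_a ?dab_b //; last exact: dab_o.
by rewrite addrN.
Qed.

Variables (h dt eps th : R) (phi0 : fld) (B : 'M[R]_nI).
Hypothesis hB : forall f : fld, \sum_x f x = 0 -> forall x, lapf h (fieldv (vecf f *m B)) x = f x.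

Lemma Jf_dir (u : fld) a b t : a != b -> \sum_x u x = \sum_x phi0 x ->
  Jf h dt eps th phi0 B (fun x => u x + t * dab a b x) - Jf h dt eps th phi0 B u =
  Phi (u a) (u b) (V h dt eps th phi0 B u a - V h dt eps th phi0 B u b) (kap h dt eps B (dab a b)) t
  - Phi (u a) (u b) (V h dt eps th phi0 B u a - V h dt eps th phi0 B u b) (kap h dt eps B (dab a b)) 0.
Proof.
move=> ab hu.
rewrite /Jf (@Q_expand R n h dt eps th phi0 B hB u (dab a b) t hu (sum_dab ab)).
have e1 : \sum_x dab a b x * V h dt eps th phi0 B u x =
   V h dt eps th phi0 B u a - V h dt eps th phi0 B u b.
  rewrite (@sum_two _ a b) // ?dab_a ?dab_b //; first by ring.
  by move=> x xa xb; rewrite dab_o // mul0r.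
have e2 : \sum_x Gn (u x + t * dab a b x) =
   \sum_x Gn (u x) + (Gn (u a + t) - Gn (u a)) + (Gn (u b - t) - Gn (u b)).
  apply/eqP; rewrite -subr_eq0; apply/eqP.
  have -> : \sum_x Gn (u x + t * dab a b x) - (\sum_x Gn (u x) + (Gn (u a + t) - Gn (u a)) +
     (Gn (u b - t) - Gn (u b))) =
    \sum_x (Gn (u x + t * dab a b x) - Gn (u x)) - ((Gn (u a + t) - Gn (u a)) +
     (Gn (u b - t) - Gn (u b))) by rewrite sumrB; ring.
  rewrite (@sum_two _ a b) // ?dab_a ?dab_b //; first by rewrite mulr1 mulrN1; ring.
  by move=> x xa xb; rewrite dab_o // mulr0 addr0 subrr.
rewrite e1 e2 /Phi !addr0 !subr0; ring.
Qed.

End Dir.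

Section ScopeW9.
Local Open Scope classical_set_scope.
Section CC.
Variables (R : realType) (T : topologicalType).
Implicit Types f g : T -> R.

Lemma cc_add f g : continuous f -> continuous g -> continuous (fun v => f v + g v).
Proof. by move=> cf cg x; apply: cvgD; [exact: cf | exact: cg]. Qed.
Lemma cc_sub f g : continuous f -> continuous g -> continuous (fun v => f v - g v).
Proof. by move=> cf cg x; apply: cvgB; [exact: cf | exact: cg]. Qed.
Lemma cc_mul f g : continuous f -> continuous g -> continuous (fun v => f v * g v).
Proof. by move=> cf cg x; apply: cvgM; [exact: cf | exact: cg]. Qed.
Lemma cc_opp f : continuous f -> continuous (fun v => - f v).
Proof. by move=> cf x; apply: cvgN; exact: cf. Qed.
Lemma cc_cst (c : R) : continuous (fun _ : T => c).
Proof. by move=> x; exact: cvg_cst. Qed.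
Lemma cc_comp (G : R -> R) f : continuous G -> continuous f -> continuous (fun v => G (f v)).
Proof. by move=> cG cf x; apply: (continuous_comp (cf x)); exact: cG. Qed.
Lemma cc_sum (X : Type) (r : seq X) (F : X -> T -> R) :
  (forall i, continuous (F i)) -> continuous (fun v => \sum_(i <- r) F i v).
Proof.
move=> cF; elim: r => [|i r IH].
  have -> : (fun v => \sum_(i <- [::]) F i v) = (fun _ => 0) by apply: funext => v; rewrite big_nil.
  exact: cc_cst.
have -> : (fun v => \sum_(j <- i :: r) F j v) = (fun v => F i v + \sum_(j <- r) F j v).
  by apply: funext => v; rewrite big_cons.
exact: cc_add.
Qed.
End CC.

Section Min.
Variables (R : realType) (n : nat).
Local Notation I := (I n).
Local Notation fld := (fld R n).
Local Notation nI := #|{: I}|.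
Variables (h dt eps th : R) (phi0 : fld) (B : 'M[R]_nI).

Local Notation Jf := (Jf h dt eps th phi0 B).

Lemma cc_coordf (x : I) : continuous (fun v : 'rV[R]_nI => fieldv v x).
Proof. exact: coord_continuous. Qed.

Lemma U_expand (g : fld) x : U B g x = \sum_p g (enum_val p) * B p (enum_rank x).
Proof. by rewrite /U /fieldv mxE; apply: eq_bigr => p _; rewrite mxE. Qed.

Lemma cc_U x : continuous (fun v : 'rV[R]_nI => U B (fun y => fieldv v y - phi0 y) x).
Proof.
have -> : (fun v : 'rV[R]_nI => U B (fun y => fieldv v y - phi0 y) x) =
  (fun v => \sum_(p <- index_enum _) (fieldv v (enum_val p) - phi0 (enum_val p)) * B p (enum_rank x)).
  by apply: funext => v; rewrite U_expand.
apply: cc_sum => p; apply: cc_mul; last exact: cc_cst.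
apply: cc_sub; [exact: cc_coordf | exact: cc_cst].
Qed.

Lemma cc_lap x : continuous (fun v : 'rV[R]_nI => lapf h (fieldv v) x).
Proof.
rewrite /lapf; apply: cc_mul; first exact: cc_cst.
by repeat (apply: cc_add || apply: cc_sub || apply: cc_opp || apply: cc_mul || apply: cc_cst || apply: cc_coordf).
Qed.

Lemma Jv_cont : continuous (fun v : 'rV[R]_nI => Jf (fieldv v)).
Proof.
rewrite /Jf /Q; apply: cc_add.
  by apply: cc_sum => x; apply: cc_comp; [exact: Gn_cont | exact: cc_coordf].
apply: cc_sub; first apply: cc_sub.
- apply: cc_mul; first exact: cc_cst.
  apply: cc_sum => x; apply: cc_mul; last exact: cc_U.
  apply: cc_sub; [exact: cc_coordf | exact: cc_cst].
- apply: cc_mul; first exact: cc_cst.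
  by apply: cc_sum => x; apply: cc_mul; [exact: cc_cst | exact: cc_coordf].
- apply: cc_mul; first exact: cc_cst.
  by apply: cc_sum => x; apply: cc_mul; [exact: cc_coordf | exact: cc_lap].
Qed.

End Min.

End ScopeW9.

Section ScopeW10.
Local Open Scope classical_set_scope.
Section Min2.
Variables (R : realType) (n : nat).
Local Notation I := (I n).
Local Notation fld := (fld R n).
Local Notation nI := #|{: I}|.
Variables (h dt eps th : R) (phi0 : fld) (B : 'M[R]_nI).
Local Notation Jf := (Jf h dt eps th phi0 B).

Lemma fieldvK' (u : fld) : fieldv (vecf u) = u.
Proof. by apply: funext => x; exact: fieldvK. Qed.

Lemma exists_min : `|\sum_x phi0 x| <= nI%:R ->
  exists phi : fld, (forall x, -1 <= phi x <= 1) /\ \sum_x phi x = \sum_x phi0 x /\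
  forall w : fld, (forall x, -1 <= w x <= 1) -> \sum_x w x = \sum_x phi0 x -> Jf phi <= Jf w.
Proof.
move=> hm.
set c := \sum_x phi0 x.
pose box := [set v : 'rV[R]_nI | forall p, `[-1, 1]%classic (v ord0 p)].
pose H := [set v : 'rV[R]_nI | \sum_p v ord0 p = c].
have cbox : compact box := @rV_compact _ nI (fun _ => `[(-1 : R), 1]%classic) (fun _ => @segment_compact R (-1) 1).
have closedH : closed H.
  have : continuous (fun v : 'rV[R]_nI => \sum_p v ord0 p).
    by apply: cc_sum => p; exact: coord_continuous.
  move/continuous_closedP => Hc; have := Hc [set x | x = c] (@closed_eq _ c); by [].
have cK : compact (box `&` H) by exact: compact_closedI.
have nI0 : (0 < nI)%N by exact: nI_gt0.
have nIR : 0 < (nI%:R : R) by rewrite ltr0n.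
pose m := c / nI%:R.
have hm1 : `|m| <= 1.
  by rewrite /m normrM normfV normr_nat ler_pdivrMr // mul1r.
have K0 : (box `&` H) !=set0.
  exists (const_mx m); split.
    move=> p /=; rewrite mxE in_itv /=.
    by move: hm1; rewrite ler_norml.
  rewrite /H /=.
  rewrite (eq_bigr (fun _ => m)); last by move=> p _; rewrite mxE.
  rewrite sumr_const card_ord -mulr_natr /m mulfVK //; exact: lt0r_neq0.
have Jc : {within box `&` H, continuous (fun v : 'rV[R]_nI => Jf (fieldv v))}.
  apply: continuous_subspaceT; exact: Jv_cont.
have [v vK vmin] := compact_EVT_min K0 cK Jc.
move: vK; rewrite inE => -[vbox vH].
exists (fieldv v); split; [|split].
- move=> x; have := vbox (enum_rank x); rewrite /= in_itv /=.
  by rewrite /fieldv.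
- by rewrite -vH /fieldv [RHS]sum_enum.
- move=> w wb ws.
  have : vecf w \in box `&` H.
    rewrite inE; split.
      by move=> p /=; rewrite mxE in_itv /=; exact: wb.
    rewrite /H /= sum_enum -ws; apply: eq_bigr => x _.
    by rewrite mxE enum_rankK.
  move/vmin; rewrite fieldvK' //.
Qed.

End Min2.

End ScopeW10.

Section Uniq.
Variables (R : realType) (n : nat).
Local Notation I := (I n).
Local Notation fld := (fld R n).

Lemma Fn_mono_prod (a b : R) : -1 < a < 1 -> -1 < b < 1 ->
  0 <= (b - a) * (Fn b - Fn a) /\ ((b - a) * (Fn b - Fn a) = 0 -> a = b).
Proof.
move=> /andP [a1 a2] /andP [b1 b2].
case: (ltgtP a b) => hab.
- have := Fn_lt a1 hab b2 => hF.
  have p : 0 < (b - a) * (Fn b - Fn a) by rewrite mulr_gt0 // subr_gt0.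
  by split; [exact: ltW | move=> e; move: p; rewrite e ltxx].
- have := Fn_lt b1 hab a2 => hF.
  have p : 0 < (b - a) * (Fn b - Fn a) by rewrite nmulr_rgt0 ?subr_lt0 // subr_lt0.
  by split; [exact: ltW | move=> e; move: p; rewrite e ltxx].
- by rewrite hab subrr mul0r; split.
Qed.

Lemma lapf_sub h (u v : fld) x : lapf h (fun y => u y - v y) x = lapf h u x - lapf h v x.
Proof. rewrite /lapf; ring. Qed.

Variables (h dt eps th : R) (phi0 : fld).
Hypothesis dt0 : 0 < dt.

Definition schemef (phi mu : fld) :=
  (forall x, (phi x - phi0 x) / dt = lapf h mu x) /\
  (forall x, mu x = ln (1 + phi x) - ln (1 - phi x) - th * phi0 x - eps ^+ 2 * lapf h phi x).

Lemma uniq_field (phi1 mu1 phi2 mu2 : fld) :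
  (forall x, -1 < phi1 x < 1) -> (forall x, -1 < phi2 x < 1) ->
  schemef phi1 mu1 -> schemef phi2 mu2 -> forall x, phi1 x = phi2 x.
Proof.
move=> b1 b2 [s11 s12] [s21 s22].
pose e : fld := fun x => phi2 x - phi1 x.
pose m : fld := fun x => mu2 x - mu1 x.
have dtn : dt != 0 by rewrite gt_eqF.
have he : forall x, e x = dt * lapf h m x.
  move=> x; rewrite /m lapf_sub -s11 -s21 /e; by field.
have hm : forall x, m x = (Fn (phi2 x) - Fn (phi1 x)) - eps ^+ 2 * lapf h e x.
  move=> x; rewrite /m /e lapf_sub s12 s22 /Fn; ring.
pose T : fld := fun x => e x * (Fn (phi2 x) - Fn (phi1 x)).
have T0 : forall x, 0 <= T x.
  move=> x; exact: (Fn_mono_prod (b1 x) (b2 x)).1.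
have hT : forall x, T x = e x * m x + eps ^+ 2 * (e x * lapf h e x).
  move=> x; rewrite hm /T; ring.
have s1 : \sum_x e x * m x <= 0.
  rewrite (eq_bigr (fun x => dt * (m x * lapf h m x))); last by move=> x _; rewrite he; ring.
  by rewrite -mulr_sumr pmulr_rle0 // lapf_nonpos.
have s2 : \sum_x e x * lapf h e x <= 0 by exact: lapf_nonpos.
have sT : \sum_x T x <= 0.
  rewrite (eq_bigr _ (fun x _ => hT x)) big_split /= -mulr_sumr.
  have : 0 <= eps ^+ 2 by exact: sqr_ge0.
  move: s1 s2; move: (\sum_x e x * m x) (\sum_x e x * lapf h e x) => p q.
  move=> hp hq he2; have : eps ^+ 2 * q <= 0 by rewrite mulr_ge0_le0.
  lra.
have sT0 : \sum_x T x = 0.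
  by apply/eqP; rewrite eq_le sT sumr_ge0 // => x _; exact: T0.
move=> x.
have : T x = 0.
  move: sT0 => /eqP; rewrite psumr_eq0; last by move=> y _; exact: T0.
  by move/allP/(_ x (mem_index_enum x)) => /eqP.
exact: (Fn_mono_prod (b1 x) (b2 x)).2.
Qed.

End Uniq.

Section Exist.
Variables (R : realType) (n : nat).
Local Notation I := (I n).
Local Notation fld := (fld R n).
Local Notation nI := #|{: I}|.
Variables (h dt eps th : R) (phi0 : fld).
Hypotheses (h0 : h != 0) (dt0 : 0 < dt) (hm : `|\sum_x phi0 x| < nI%:R).

Lemma exist_field : exists phi mu : fld, (forall x, -1 < phi x < 1) /\
  \sum_x phi x = \sum_x phi0 x /\ schemef h dt eps th phi0 phi mu.
Proof.
have [B hB] := @lap_surj R n h h0.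
have [phi [pb [ps pmin]]] := @exists_min R n h dt eps th phi0 B (ltW hm).
pose Vp := V h dt eps th phi0 B phi.
have hmin : forall a b, a != b -> isMin (phi a) (phi b) (Vp a - Vp b) (kap h dt eps B (@dab R n a b)).
  move=> a b ab t e1 e2 e3 e4.
  rewrite -subr_ge0 -(@Jf_dir R n h dt eps th phi0 B hB phi a b t ab ps).
  rewrite subr_ge0; apply: pmin.
    move=> x; case: (eqVneq x a) => [->|xa]; first by rewrite dab_a // mulr1 e1 e2.
    case: (eqVneq x b) => [->|xb]; first by rewrite dab_b // mulrN1 e3 e4.
    by rewrite dab_o // mulr0 addr0.
  by rewrite big_split /= -mulr_sumr sum_dab // mulr0 addr0.
have pint : forall x, -1 < phi x < 1.
  move=> a; have /andP [pa1 pa2] := pb a.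
  rewrite !lt_neqAle pa1 pa2 !andbT; apply/andP; split.
    apply/negP => /eqP ea.
    have [b hb] : exists b, -1 < phi b.
      apply/not_existsP => H.
      have : \sum_x phi x = - nI%:R.
        rewrite (eq_bigr (fun _ => -1)); last first.
          by move=> x _; have := H x; have := pb x; case/andP => p1 _; rewrite lt_neqAle p1 andbT => /negP; rewrite negbK => /eqP.
        by rewrite sumr_const mulNrn.
      move: hm; rewrite -ps => hm' e; move: hm'; rewrite e normrN ger0_norm ?ler0n // ltxx.
      done.
    have ab : a != b by apply/eqP => eab; move: hb; rewrite -eab -ea ltxx.
    have := hmin a b ab; rewrite -ea; apply: bnd2 => //; exact: (andP (pb b)).2.
  apply/negP => /eqP ea.
  have [b hb] : exists b, phi b < 1.
    apply/not_existsP => H.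
    have : \sum_x phi x = nI%:R.
      rewrite (eq_bigr (fun _ => 1)); last first.
        by move=> x _; have := H x; have := pb x; case/andP => _ p1; rewrite lt_neqAle p1 andbT => /negP; rewrite negbK => /eqP.
      by rewrite sumr_const.
    move: hm; rewrite -ps => hm' e; move: hm'; rewrite e ger0_norm ?ler0n // ltxx.
    done.
  have ab : a != b by apply/eqP => eab; move: hb; rewrite -eab ea ltxx.
  have := hmin a b ab; rewrite ea; apply: bnd1 => //; exact: (andP (pb b)).1.
pose W := fun x => Fn (phi x) + Vp x.
have hW : forall x, W x = W (ord0, ord0, ord0).
  move=> x; case: (eqVneq x (ord0, ord0, ord0)) => [-> //|xne].
  have := foc (andP (pint x)).1 (andP (pint x)).2 (andP (pint (ord0, ord0, ord0))).1
     (andP (pint (ord0, ord0, ord0))).2 (hmin _ _ xne).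
  rewrite /W => e; apply/eqP; rewrite -subr_eq0; apply/eqP; rewrite -e; ring.
pose f : fld := fun y => phi y - phi0 y.
have hf : \sum_x f x = 0 by rewrite /f sumrB ps subrr.
pose mu : fld := fun x => Fn (phi x) - th * phi0 x - eps ^+ 2 * lapf h phi x.
have hmu : forall x, mu x = W (ord0, ord0, ord0) + dt^-1 * U B f x.
  move=> x; rewrite -(hW x) /W /Vp /V /mu /f; ring.
exists phi, mu; split; first exact: pint.
split; first exact: ps.
split; last by move=> x; rewrite /mu /Fn.
move=> x.
rewrite (@lapf_ext R n h mu (fun x => W (ord0, ord0, ord0) + dt^-1 * U B f x)) //.
have -> : lapf h (fun x => W (ord0, ord0, ord0) + dt^-1 * U B f x) x = dt^-1 * lapf h (U B f) x.
  rewrite /lapf; ring.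
rewrite /U hB // /f; rewrite mulrC //.
Qed.

End Exist.

Section Final.
Variables (R : realType) (n : nat).
Local Notation N := n.+1.
Local Notation I := (I n).
Local Notation fld := (fld R n).
Local Notation nI := #|{: I}|.

Lemma sum3 (g : grid R N) : \sum_i \sum_j \sum_k g i j k = \sum_(x : I) fg g x.
Proof. by rewrite pair_bigA pair_bigA. Qed.

Lemma nI_eq : nI = (N * N * N)%N.
Proof. by rewrite !card_prod card_ord. Qed.

Lemma gmeanE (L : R) (g : grid R N) : 0 < L -> gmean L g = (\sum_(x : I) fg g x) / nI%:R.
Proof.
move=> L0; rewrite /gmean /ip.
rewrite (eq_bigr (fun i => \sum_j \sum_k g i j k)); last first.
  by move=> i _; apply: eq_bigr => j _; apply: eq_bigr => k _; rewrite mulr1.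
rewrite sum3 nI_eq !natrM.
have N0 : (N%:R : R) != 0 by rewrite pnatr_eq0.
have hn : 0 <= (n%:R : R) by exact: ler0n.
field; apply/andP; split; last exact: lt0r_neq0.
apply: lt0r_neq0; lra.
Qed.

Lemma fgK (u : fld) : fg (gr u) = u.
Proof. by apply: funext => -[[i j] k]. Qed.

Lemma le_bigmax0 (F : 'I_N -> R) i : F i <= \big[Num.max/0]_j F j.
Proof. by rewrite (bigD1 i) //= le_max lexx. Qed.

Lemma bigmax_lt1 (F : 'I_N -> R) : (forall i, F i < 1) -> \big[Num.max/0]_j F j < 1.
Proof.
move=> H; apply: (big_ind (fun x => x < 1)); first exact: ltr01.
  by move=> x y hx hy; rewrite gt_max hx hy.
by move=> i _; exact: H.
Qed.

Lemma norm_inf_lt1 (g : grid R N) : norm_inf g < 1 <-> forall x, `|fg g x| < 1.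
Proof.
split.
- move=> H [[i j] k]; apply: le_lt_trans H; rewrite /fg /=.
  apply: le_trans (le_bigmax0 _ i); apply: le_trans (le_bigmax0 _ j).
  exact: (le_bigmax0 (fun k => `|g i j k|) k).
- move=> H; apply: bigmax_lt1 => i; apply: bigmax_lt1 => j; apply: bigmax_lt1 => k.
  exact: (H (i, j, k)).
Qed.

Lemma scheme_field (L eps th dt : R) (g0 g1 m : grid R N) :
  scheme L eps th dt g0 g1 m <-> schemef (L / N%:R) dt eps th (fg g0) (fg g1) (fg m).
Proof.
rewrite /scheme /schemef; split.
- case=> [s1 s2]; split.
    by case=> [[i j] k]; rewrite /fg /= s1 lapfE.
  by case=> [[i j] k]; rewrite /fg /= s2 lapfE.
- case=> [s1 s2]; split.
    by move=> i j k; rewrite lapfE; exact: (s1 (i, j, k)).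
  by move=> i j k; rewrite lapfE; exact: (s2 (i, j, k)).
Qed.

End Final.

Unset Implicit Arguments.

Theorem theorem2p3 (R : realType) (L eps theta0 dt M : R) (N : nat)
    (hL : 0 < L) (heps : 0 < eps) (htheta : 0 < theta0) (hdt : 0 < dt)
    (hN : (0 < N)%N) (hM : 0 < M) (phi0 : grid R N)
    (hbound : norm_inf phi0 <= M) (hmean : `|gmean L phi0| < 1) :
  exists phi1 : grid R N,
    admissible L eps theta0 dt phi0 phi1 /\
    forall psi : grid R N, admissible L eps theta0 dt phi0 psi -> psi = phi1.
Proof.
case: N hN phi0 hbound hmean => [//|n] _ phi0 _ hmean.
set h := L / n.+1%:R.
have h0 : h != 0 by rewrite /h mulf_neq0 ?invr_eq0 ?pnatr_eq0 // lt0r_neq0.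
have nIR : 0 < (#|{: I n}|%:R : R) by rewrite ltr0n nI_gt0.
have hm : `|\sum_x fg phi0 x| < #|{: I n}|%:R.
  move: hmean; rewrite gmeanE // normrM normfV normr_nat ltr_pdivrMr // mul1r.
  done.
have [phi [mu [pint [ps psch]]]] := @exist_field R n h dt eps theta0 (fg phi0) h0 hm.
exists (gr phi); split.
- split; first by exists (gr mu); apply/scheme_field; rewrite !fgK.
  split.
    rewrite gmeanE //; apply/eqP; rewrite mulf_eq0; apply/orP; left.
    rewrite /fg /= sumrB (eq_bigr phi); last by case=> [[i j] k].
    rewrite sumr_const ps gmeanE // -[(_ / _) *+ _]mulr_natr mulfVK ?subrr //.
    exact: lt0r_neq0.
  apply/norm_inf_lt1 => x; rewrite fgK ltr_norml; exact: pint.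
- move=> psi [[m2 sch2] [_ hn]].
  move/scheme_field: sch2 => sch2.
  move/norm_inf_lt1: hn => hn.
  have b2 : forall x, -1 < fg psi x < 1 by move=> x; rewrite -ltr_norml; exact: hn.
  have e := @uniq_field R n h dt eps theta0 (fg phi0) hdt phi mu (fg psi) (fg m2) pint b2 psch sch2.
  apply: funext => i; apply: funext => j; apply: funext => k.
  by rewrite /gr e.
Qed.
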